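(* If two weighted hybrid graphs (with positive edge weights) have identical vertex sets and identical $L$-edge and $Q$-edge sets, then their hybrid Laplacians have identical kernels.
   Context: A weighted hybrid graph $G=(V,E_L+E_Q)$ has a set $E_L$ of $L$-edges and a set $E_Q$ of $Q$-edges, each edge with a positive weight. Its hybrid Laplacian is $\mathcal{L}(G)=L(S_l)+Q(S_q)$ with $S_l=(V,E_L)$, $S_q=(V,E_Q)$, where for a weighted graph $L=D-A$ and $Q=D+A$ with $A$ the weighted adjacency matrix and $D$ the diagonal matrix of weighted degrees. The edge weights of the two graphs may differ. *)

(* Defs.v *)
From mathcomp Require Import all_boot all_order all_algebra.
Set Implicit Arguments. Unset Strict Implicit. Unset Printing Implicit Defensive.
Import Order.TTheory GRing.Theory Num.Theory.
Local Open Scope ring_scope.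

(* Vertices are 'I_n.  An edge set is a relation E : rel 'I_n (assumed
   symmetric and irreflexive: a simple undirected graph); a weighting is
   w : 'I_n -> 'I_n -> R, only its values on edges matter. *)

Definition wadj (R : ringType) (n : nat) (E : rel 'I_n) (w : 'I_n -> 'I_n -> R)
  : 'M[R]_n := \matrix_(i, j) (if E i j then w i j else 0).

Definition wdeg (R : ringType) (n : nat) (E : rel 'I_n) (w : 'I_n -> 'I_n -> R)
  : 'M[R]_n := \matrix_(i, j) (if i == j then \sum_k wadj E w i k else 0).

Definition wlap (R : ringType) (n : nat) (E : rel 'I_n) (w : 'I_n -> 'I_n -> R)
  : 'M[R]_n := wdeg E w - wadj E w.
Definition wslap (R : ringType) (n : nat) (E : rel 'I_n) (w : 'I_n -> 'I_n -> R)
  : 'M[R]_n := wdeg E w + wadj E w.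

Definition hybrid_lap (R : ringType) (n : nat) (EL EQ : rel 'I_n)
  (wL wQ : 'I_n -> 'I_n -> R) : 'M[R]_n := wlap EL wL + wslap EQ wQ.

Definition simple_edges (n : nat) (E : rel 'I_n) : Prop :=
  (forall i j, E i j = E j i) /\ (forall i, ~~ E i i).

Definition pos_weight (R : numDomainType) (n : nat) (E : rel 'I_n)
  (w : 'I_n -> 'I_n -> R) : Prop :=
  forall i j, E i j -> 0 < w i j /\ w i j = w j i.

(* Main.v *)
Require Import Defs.
From mathcomp Require Import all_boot all_order all_algebra.
From mathcomp Require Import ring lra.
Import Order.TTheory GRing.Theory Num.Theory.
Set Implicit Arguments.
Local Open Scope ring_scope.

Section H.
Variables (R : realFieldType) (n : nat) (EL EQ : rel 'I_n) (wL wQ : 'I_n -> 'I_n -> R).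
Let a i k := if EL i k then wL i k else 0.
Let b i k := if EQ i k then wQ i k else 0.

Lemma entryE (x : 'cV[R]_n) i :
  (hybrid_lap EL EQ wL wQ *m x) i 0 =
  \sum_k (a i k * (x i 0 - x k 0) + b i k * (x i 0 + x k 0)).
Proof.
rewrite !mxE.
transitivity (\sum_j ((if j == i then ((\sum_k a i k) + \sum_k b i k) * x j 0 else 0)
   + (- a i j + b i j) * x j 0)).
  apply: eq_bigr => j _; rewrite /hybrid_lap /wlap /wslap /wdeg /wadj !mxE.
  have sm (F : 'I_n -> 'I_n -> R) : \sum_k (\matrix_(i0, j0) F i0 j0 : 'M[R]_n) i k = \sum_k F i k.
    by apply: eq_bigr => k _; rewrite mxE.
  rewrite !sm.
  rewrite [j == i]eq_sym; case: eqP => [<-|_]; rewrite /a /b. { set s1 := \sum_k (if EL i k then _ else _); set s2 := \sum_k (if EQ i k then _ else _); move: s1 s2 (x _ 0) (if EL _ _ then _ else _) (if EQ _ _ then _ else _) => *; ring. } move: (x _ 0) (if EL _ _ then _ else _) (if EQ _ _ then _ else _) => *; ring.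
rewrite big_split /= -big_mkcond /= big_pred1_eq.
rewrite mulrDl !mulr_suml -!big_split /=; apply: eq_bigr => k _; ring.
Qed.
End H.

Definition Pk (R : realFieldType) n (EL EQ : rel 'I_n) (x : 'cV[R]_n) :=
  (forall i j, EL i j -> x i 0 = x j 0) /\ (forall i j, EQ i j -> x i 0 = - x j 0).

Lemma kerP (R : realFieldType) (n : nat) (EL EQ : rel 'I_n)
  (wL wQ : 'I_n -> 'I_n -> R) :
  simple_edges EL -> simple_edges EQ ->
  pos_weight EL wL -> pos_weight EQ wQ ->
  forall x : 'cV[R]_n,
    hybrid_lap EL EQ wL wQ *m x = 0 <-> @Pk R n EL EQ x.
Proof.
move=> [sL _] [sQ _] pL pQ x.
set a := fun i k => if EL i k then wL i k else 0.
set b := fun i k => if EQ i k then wQ i k else 0.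
have asym i k : a i k = a k i.
  rewrite /a sL; case E: (EL k i) => //; have [_ ->] := pL _ _ E; done.
have bsym i k : b i k = b k i.
  rewrite /b sQ; case E: (EQ k i) => //; have [_ ->] := pQ _ _ E; done.
have age i k : 0 <= a i k.
  rewrite /a; case E: (EL i k) => //; have [/ltW -> _] := pL _ _ E; done.
have bge i k : 0 <= b i k.
  rewrite /b; case E: (EQ i k) => //; have [/ltW -> _] := pQ _ _ E; done.
split.
- move=> H0.
  have e0 i : \sum_k (a i k * (x i 0 - x k 0) + b i k * (x i 0 + x k 0)) = 0.
    by rewrite -(@entryE R n EL EQ wL wQ) H0 mxE.
  set F := fun i k => a i k * (x i 0 - x k 0) ^+ 2 + b i k * (x i 0 + x k 0) ^+ 2.
  have S0 : \sum_i \sum_k F i k = 0.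
    have -> : \sum_i \sum_k F i k =
      \sum_i \sum_k (x i 0 * (a i k * (x i 0 - x k 0) + b i k * (x i 0 + x k 0)))
      + \sum_i \sum_k (x k 0 * (a k i * (x k 0 - x i 0) + b k i * (x k 0 + x i 0))).
      rewrite -big_split /=; apply: eq_bigr => i _; rewrite -big_split /=.
      apply: eq_bigr => k _; rewrite /F (asym k i) (bsym k i); ring.
    rewrite [X in _ + X]exchange_big /=.
    rewrite big1 ?add0r; last by move=> i _; rewrite -mulr_sumr e0 mulr0.
    done.
  have Fge i k : 0 <= F i k by rewrite /F addr_ge0 // mulr_ge0 // sqr_ge0.
  have Fz i k : F i k = 0.
    have Sg j : true -> 0 <= \sum_k F j k by move=> _; apply: sumr_ge0 => l _; apply: Fge.
    have Hi : \sum_k F i k = 0 by apply: (psumr_eq0P Sg S0).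
    by apply: (psumr_eq0P (fun l _ => Fge i l) Hi).
  have Fz2 i k : a i k * (x i 0 - x k 0) ^+ 2 = 0 /\ b i k * (x i 0 + x k 0) ^+ 2 = 0.
    have := Fz i k; rewrite /F; move/eqP; rewrite (paddr_eq0 (mulr_ge0 (age i k) (sqr_ge0 _)) (mulr_ge0 (bge i k) (sqr_ge0 _))).
    by case/andP => /eqP -> /eqP ->.
  split=> i j E.
  + have [H _] := Fz2 i j; move: H; rewrite /a E.
    have [wp _] := pL _ _ E; move/eqP; rewrite mulf_eq0 (gt_eqF wp) /= sqrf_eq0 subr_eq0.
    by move/eqP.
  + have [_ H] := Fz2 i j; move: H; rewrite /b E.
    have [wp _] := pQ _ _ E; move/eqP; rewrite mulf_eq0 (gt_eqF wp) /= sqrf_eq0 addr_eq0.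
    by move/eqP.
- move=> [PL PQ]; apply/matrixP => i j; rewrite (ord1 j) entryE [RHS]mxE.
  apply: big1 => k _.
  rewrite /=.
  have -> : (if EL i k then wL i k else 0) * (x i 0 - x k 0) = 0.
    by case E: (EL i k); rewrite ?mul0r // (PL _ _ E) subrr mulr0.
  have -> : (if EQ i k then wQ i k else 0) * (x i 0 + x k 0) = 0.
    by case E: (EQ i k); rewrite ?mul0r // (PQ _ _ E) addNr mulr0.
  by rewrite addr0.
Qed.

Theorem lemma2 (R : realFieldType) (n : nat) (EL EQ : rel 'I_n)
  (wL1 wQ1 wL2 wQ2 : 'I_n -> 'I_n -> R) :
  simple_edges EL -> simple_edges EQ ->
  pos_weight EL wL1 -> pos_weight EQ wQ1 ->
  pos_weight EL wL2 -> pos_weight EQ wQ2 ->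
  forall x : 'cV[R]_n,
    hybrid_lap EL EQ wL1 wQ1 *m x = 0 <-> hybrid_lap EL EQ wL2 wQ2 *m x = 0.
Proof.
move=> sL sQ p1 q1 p2 q2 x.
rewrite (kerP sL sQ p1 q1) (kerP sL sQ p2 q2); done.
Qed.
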